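(* Let $p=4k+1$ be a prime, let $J(k)=\sum_{i=1}^{4k-2}\big(\frac{i(i+1)(i+2)}{p}\big)$, let $S\subset\mathbb{P}^5$ be the surface over $\mathbb{F}_p$ defined by $x_1^2-x_2^2=x_3^2$, $x_0^2-x_1^2=x_4^2$, $x_0^2-x_2^2=x_5^2$, let $M_p$ be the number of solutions $(x,y,z)\in\mathbb{F}_p^3$ of $z^2=(x^2y^2+1)(x^2+y^2)$, and let $N_p$ be the number of solutions $(x,y)\in\mathbb{F}_p^2$ of $y^2=x^3-x$. Then $$|S(\mathbb{F}_p)|=(p+1)^2+J(k)^2\quad\text{if and only if}\quad M_p=(p+1)^2+(N_p-p)^2+1=(p+1)^2+J(k)^2+1.$$
   Context: $\big(\frac{a}{p}\big)$ is the Legendre symbol. *)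

(* Defs.v *)
From mathcomp Require Import all_boot all_algebra.
Set Implicit Arguments. Unset Strict Implicit. Unset Printing Implicit Defensive.
Import GRing.Theory.
Local Open Scope ring_scope.

Definition legendre (a : int) (p : nat) : int :=
  if (p%:Z %| a)%Z then 0
  else if [exists x : 'I_p, (p%:Z %| (x%:Z) ^+ 2 - a)%Z] then 1 else -1.

Definition J (k : nat) : int :=
  \sum_(1 <= i < (4 * k - 2).+1) legendre ((i * i.+1 * i.+2)%N%:Z) (4 * k + 1).

(* Number of F_p-points of S in P^5: nonzero solutions in F_p^6 of the
   homogeneous equations, divided by |F_p^*| = p - 1 (the set is closed
   under scaling, so this counts the projective points exactly). *)
Definition S_eqs (p : nat) (x : {ffun 'I_6 -> 'F_p}) : bool :=
  [&& x (inord 1) ^+ 2 - x (inord 2) ^+ 2 == x (inord 3) ^+ 2,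
      x (inord 0) ^+ 2 - x (inord 1) ^+ 2 == x (inord 4) ^+ 2 &
      x (inord 0) ^+ 2 - x (inord 2) ^+ 2 == x (inord 5) ^+ 2].

Definition S_count (p : nat) : nat :=
  (#|[set x : {ffun 'I_6 -> 'F_p} | [exists i, x i != 0%R] && S_eqs x]| %/ p.-1)%N.

Definition M_count (p : nat) : nat :=
  #|[set t : 'F_p * 'F_p * 'F_p |
      t.2 ^+ 2 == (t.1.1 ^+ 2 * t.1.2 ^+ 2 + 1) * (t.1.1 ^+ 2 + t.1.2 ^+ 2)]|.

Definition N_count (p : nat) : nat :=
  #|[set t : 'F_p * 'F_p | t.2 ^+ 2 == t.1 ^+ 3 - t.1]|.

(* Main.v *)
Require Import Defs.
From mathcomp Require Import all_boot all_algebra all_field.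
From mathcomp Require Import ring zify.
Set Implicit Arguments. Unset Strict Implicit. Unset Printing Implicit Defensive.
Import GRing.Theory Num.Theory.
Local Open Scope ring_scope.

Section Main.
Variable p : nat.
Hypothesis pr : prime p.
Variable k : nat.
Hypothesis pk : p = (4 * k + 1)%N.
Local Notation F := ('F_p : finFieldType).

Lemma cardF : #|F| = p. Proof. exact: card_Fp. Qed.

Lemma p_gt2 : (2 < p)%N.
Proof. have := prime_gt1 pr. rewrite pk. case: k => [|q] //. lia. Qed.

Lemma two_neq0 : (2 : F) != 0.
Proof.
rewrite -(dvdn_pcharf (pchar_Fp pr)). apply/negP => /(dvdn_leq (isT : (0 < 2)%N)). have := p_gt2. lia.
Qed.

Definition h := (p.-1)./2.

Lemma fermat (x : F) : x != 0 -> x ^+ p.-1 = 1.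
Proof.
move=> x0. have E := expf_card x. rewrite cardF in E.
have hp : p = (p.-1).+1 by rewrite prednK // prime_gt0.
move: (p.-1) hp => q hq.
have : x * x ^+ q = x * 1 by rewrite -exprS mulr1 -[in RHS]E; congr (x ^+ _).
by move/(mulfI x0).
Qed.

Lemma h2k : h = (2 * k)%N.
Proof. rewrite /h pk addn1 /=. have -> : (4 * k = (2 * k).*2)%N by rewrite -mul2n mulnA. by rewrite doubleK. Qed.

Lemma h_gt0 : (0 < h)%N.
Proof. rewrite h2k. have := p_gt2. rewrite pk. lia. Qed.

Lemma hh : (h * 2 = p.-1)%N.
Proof. rewrite h2k pk. lia. Qed.

Lemma oneNm1 : (1 : F) != -1.
Proof.
apply/negP => /eqP E. have : (2 : F) == 0 by rewrite -[2]/(1 + 1) {1}E addNr.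
by rewrite (negbTE two_neq0).
Qed.

Lemma pow_h (x : F) : x != 0 -> x ^+ h = 1 \/ x ^+ h = -1.
Proof.
move=> x0. have : (x ^+ h) ^+ 2 == 1 by rewrite -exprM hh fermat.
by rewrite sqrf_eq1 => /orP [] /eqP; [left|right].
Qed.

Definition chi (x : F) : int := if x == 0 then 0 else if x ^+ h == 1 then 1 else -1.

Lemma chi0 : chi 0 = 0. Proof. by rewrite /chi eqxx. Qed.

Lemma chi_mul (x y : F) : chi (x * y) = chi x * chi y.
Proof.
rewrite /chi mulf_eq0. have [->|x0] /= := eqVneq x 0; first by rewrite mul0r.
case: (eqVneq y 0) => [Hy|y0]; first by subst y; rewrite /= mulr0.
rewrite exprMn.
case: (pow_h x0) => ->; case: (pow_h y0) => ->; rewrite ?eqxx ?mulr1 ?mul1r ?mulrNN ?mulr1 ?eqxx //;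
by rewrite eq_sym (negbTE oneNm1).
Qed.

Lemma chi_sq (x : F) : x != 0 -> chi (x ^+ 2) = 1.
Proof.
move=> x0. rewrite /chi sqrf_eq0 (negbTE x0) -exprM mulnC hh fermat // eqxx //.
Qed.

Lemma chiN1 : chi (-1) = 1.
Proof. by rewrite /chi oppr_eq0 oner_eq0 h2k exprM sqrrN expr1n expr1n eqxx. Qed.

Lemma chi_vals (x : F) : x != 0 -> chi x = 1 \/ chi x = -1.
Proof. by rewrite /chi => /negbTE ->; case: ifP; [left|right]. Qed.

Lemma chi_sqr_eq (x : F) : x != 0 -> chi x * chi x = 1.
Proof. by move/chi_vals => [] ->. Qed.

Lemma chiV (x : F) : chi (x^-1) = chi x.
Proof.
have [->|x0] := eqVneq x 0; first by rewrite invr0.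
have : chi x * chi (x^-1) = 1 by rewrite -chi_mul mulfV // /chi oner_eq0 expr1n eqxx.
by case: (chi_vals x0) => ->; rewrite ?mul1r // => /eqP; rewrite mulN1r eqr_oppLR => /eqP.
Qed.

Lemma chi1 : chi 1 = 1.
Proof. by rewrite /chi oner_eq0 expr1n eqxx. Qed.

Lemma chiN (x : F) : chi (- x) = chi x.
Proof. by rewrite -mulN1r chi_mul chiN1 mul1r. Qed.


Definition sqc (x : F) : nat := #|[set y : F | y ^+ 2 == x]|.

Lemma card_sum (T : finType) (P : pred T) :
  (#|[set x | P x]|%:R : int) = \sum_x (P x)%:R.
Proof.
rewrite -sum1dep_card natr_sum big_mkcond /=. apply: eq_bigr => i _. by case: (P i).
Qed.

Lemma sum_sq (g : F -> int) : \sum_y g (y ^+ 2) = \sum_s (sqc s)%:R * g s.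
Proof.
under [RHS]eq_bigr => s _ do rewrite /sqc card_sum mulr_suml.
rewrite exchange_big /=. apply: eq_bigr => y _.
rewrite (bigD1 (y ^+ 2)) //= eqxx mul1r big1 ?addr0 // => s /negbTE.
by rewrite eq_sym => ->; rewrite mul0r.
Qed.

Lemma sqc0 : sqc 0 = 1%N.
Proof.
rewrite /sqc (_ : [set y : F | y ^+ 2 == 0] = [set 0]) ?cards1 //.
by apply/setP => y; rewrite !inE sqrf_eq0.
Qed.

Lemma sqc_sq (y0 : F) : y0 != 0 -> sqc (y0 ^+ 2) = 2%N.
Proof.
move=> y00. rewrite /sqc (_ : [set y : F | y ^+ 2 == y0 ^+ 2] = [set y0; - y0]).
  rewrite cards2. suff -> : y0 != - y0 by [].
  apply/negP => /eqP E. have : y0 *+ 2 == 0 by rewrite mulr2n {2}E addrN.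
  by rewrite -mulr_natl mulf_eq0 (negbTE two_neq0) (negbTE y00).
by apply/setP => y; rewrite !inE eqf_sqr.
Qed.

Lemma sqc_pos (x : F) : (0 < sqc x)%N -> exists y, y ^+ 2 = x.
Proof. by case/card_gt0P => y; rewrite inE => /eqP <-; exists y. Qed.

Lemma sqc_nz (x : F) : x != 0 -> sqc x = if (0 < sqc x)%N then 2%N else 0%N.
Proof.
move=> x0. case: ifP => [/sqc_pos [y Hy]|]; last by case: (sqc x).
have y0 : y != 0 by apply: contra x0 => /eqP y0; rewrite -Hy y0 expr0n.
by rewrite -Hy sqc_sq.
Qed.

Lemma sum_sqc : \sum_s (sqc s)%:R = p%:R :> int.
Proof.
have := sum_sq (fun _ => 1).
rewrite sumr_const cardF => ->. by apply: eq_bigr => s _; rewrite mulr1.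
Qed.

Lemma euler (x : F) : x != 0 -> x ^+ h = 1 -> exists y, y ^+ 2 = x.
Proof.
move=> x0 xh.
pose Q := [set z : F | (z != 0) && (0 < sqc z)%N].
pose U := [set z : F | z ^+ h == 1].
have cQ : #|Q| = h.
  have := sum_sqc. rewrite (bigD1 0) //= sqc0.
  rewrite (eq_bigr (fun s => 2%:R * (s \in Q)%:R)); last first.
    move=> s s0. rewrite inE s0 /= (sqc_nz s0). by case: (0 < sqc s)%N; rewrite ?mulr1 ?mulr0.
  rewrite -mulr_sumr.
  have -> : \sum_(i | i != 0) ((i \in Q)%:R : int) = #|Q|%:R.
    have := card_sum (fun x => x \in Q).
    rewrite (_ : [set x | x \in Q] = Q); last by apply/setP => z; rewrite inE.
    move=> ->. rewrite [RHS](bigD1 0) //= (_ : 0 \in Q = false) ?add0r //.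
    by rewrite inE eqxx.
  rewrite -natrM -natrD => /eqP. rewrite eqr_nat => /eqP E.
  move: E. clearbody Q U. move: #|Q| h hh => q hq hh E. lia.
have cU : (#|U| <= h)%N.
  rewrite cardE. apply: max_unity_roots h_gt0 _ (enum_uniq _).
  by apply/allP => z; rewrite mem_enum inE unity_rootE.
have QU : Q \subset U.
  apply/subsetP => z; rewrite !inE => /andP [z0 /sqc_pos [y Hy]].
  have y0 : y != 0 by apply: contra z0 => /eqP y0; rewrite -Hy y0 expr0n.
  by rewrite -Hy -exprM mulnC hh fermat.
have : Q == U by rewrite eqEcard QU cQ.
move/eqP => QeU. have : x \in U by rewrite inE xh.
rewrite -QeU inE => /andP [_]. exact: sqc_pos.
Qed.

Lemma sqc_chi (x : F) : (sqc x)%:R = 1 + chi x :> int.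
Proof.
have [->|x0] := eqVneq x 0; first by rewrite sqc0 chi0.
case: (boolP (0 < sqc x)%N) => Hs.
  have [y Hy] := sqc_pos Hs.
  have y0 : y != 0 by apply: contra x0 => /eqP y0; rewrite -Hy y0 expr0n.
  by rewrite -Hy sqc_sq // chi_sq.
have -> : sqc x = 0%N by case: (sqc x) Hs.
rewrite /chi (negbTE x0). case: ifP => // /eqP xh.
have [y Hy] := euler x0 xh. exfalso. move: Hs. rewrite /sqc.
have : y \in [set y : F | y ^+ 2 == x] by rewrite inE Hy.
by move=> Hy' /negP; apply; apply/card_gt0P; exists y.
Qed.


Lemma sum0 (G : F -> int) : \sum_x G x = G 0 + \sum_(x | x != 0) G x.
Proof. by rewrite (bigD1 0). Qed.

Lemma sum_nz_const (c : int) : \sum_(x : F | x != 0) c = (p%:R - 1) * c.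
Proof.
rewrite sumr_const.
have -> : #|[pred x : F | x != 0]| = #|predC1 (0 : F)| by apply: eq_card.
rewrite cardC1 cardF -[c *+ _]mulr_natl. congr (_ * _). by rewrite -subn1 natrB // prime_gt0.
Qed.

Lemma sum_mulc (c : F) (G : F -> int) : c != 0 -> \sum_x G (c * x) = \sum_x G x.
Proof. move=> c0. by rewrite [RHS](reindex_inj (mulfI c0)). Qed.

Lemma sum_mulc_nz (c : F) (G : F -> int) : c != 0 ->
  \sum_(x | x != 0) G (c * x) = \sum_(x | x != 0) G x.
Proof.
move=> c0. rewrite [RHS](reindex_inj (mulfI c0)) /=.
by apply: eq_bigl => x; rewrite mulf_eq0 (negbTE c0).
Qed.

Lemma sum_chi : \sum_x chi x = 0.
Proof.
have := sum_sqc. under eq_bigr do rewrite sqc_chi.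
rewrite big_split /= sumr_const cardF  => E. apply: (addrI (p%:R)). by rewrite E addr0.
Qed.

Lemma sqc_chiN (x : F) : sqc (- x) = sqc x.
Proof. apply/eqP. by rewrite -(eqr_nat int) !sqc_chi chiN. Qed.

Lemma sqc_scale (c x : F) : c != 0 -> sqc (c ^+ 2 * x) = sqc x.
Proof. move=> c0. apply/eqP. by rewrite -(eqr_nat int) !sqc_chi chi_mul chi_sq // mul1r. Qed.

Lemma hyper (g : F -> int) :
  \sum_x (sqc (x ^+ 2 - 1))%:R * g x = \sum_(n | n != 0) g ((n ^+ 2 + 1) / (2 * n)).
Proof.
under eq_bigr => x _ do rewrite /sqc card_sum mulr_suml.
under eq_bigr => x _ do rewrite (reindex_inj (subIr x)) /=.
rewrite exchange_big /= [RHS]big_mkcond /=. apply: eq_bigr => n _.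
case: eqP => [->|/eqP n0].
  apply: big1 => x _. rewrite (_ : ((0 - x) ^+ 2 == x ^+ 2 - 1) = false) ?mul0r //.
  apply/negbTE. rewrite sub0r sqrrN.
  apply/negP => /eqP E. have : (x ^+ 2 - (x ^+ 2 - 1) : F) = 0 by rewrite -E subrr.
  rewrite (_ : x ^+ 2 - (x ^+ 2 - 1) = 1); last by ring.
  by move/eqP; rewrite oner_eq0.
have n2 : 2 * n != 0 by rewrite mulf_neq0 // two_neq0.
rewrite (bigD1 ((n ^+ 2 + 1) / (2 * n))) //= big1 ?addr0.
  rewrite (_ : (_ == _) = true) ?mul1r //. apply/eqP. field. by rewrite n0 two_neq0.
move=> x xne. rewrite (_ : (_ == _) = false) ?mul0r //. apply/negbTE.
apply: contra xne => /eqP E. apply/eqP.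
have E2 : x * (2 * n) = n ^+ 2 + 1.
  have : (n - x) ^+ 2 - (x ^+ 2 - 1) = 0 by rewrite E subrr.
  rewrite (_ : (n - x) ^+ 2 - (x ^+ 2 - 1) = n ^+ 2 + 1 - x * (2 * n)); last by ring.
  by move/eqP; rewrite subr_eq0 => /eqP.
by rewrite -E2 mulfK.
Qed.

Lemma sum_chi_sqm1 : \sum_x chi (x ^+ 2 - 1) = -1.
Proof.
have := hyper (fun _ => 1). under eq_bigr do rewrite mulr1 sqc_chi.
rewrite big_split /= sumr_const cardF sum_nz_const mulr1 => E.
apply: (addrI (p%:R)). rewrite E. ring.
Qed.

Lemma sum_chi_1msq : \sum_x chi (1 - x ^+ 2) = -1.
Proof. rewrite -sum_chi_sqm1. apply: eq_bigr => x _. by rewrite -chiN opprB. Qed.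

Lemma sum_chi_sq : \sum_x chi (x ^+ 2) = p%:R - 1.
Proof.
rewrite sum0 expr0n /= chi0 add0r -[RHS]mulr1 -sum_nz_const.
apply: eq_bigr => x x0. by rewrite chi_sq.
Qed.

Definition a := \sum_x chi (x ^+ 3 - x).

Lemma sum_chi_a : \sum_x chi x * chi (x ^+ 2 - 1) = a.
Proof. apply: eq_bigr => x _. rewrite -chi_mul. congr chi. ring. Qed.


Definition fQ (x y : F) := chi ((1 - x ^+ 2 * y ^+ 2) * (x ^+ 2 - y ^+ 2)).

Lemma sum_nz_a : \sum_(v | v != 0) chi v * chi (v ^+ 2 - 1) = a.
Proof. by rewrite -sum_chi_a [RHS]sum0 chi0 mul0r add0r. Qed.

Lemma sum_nz_sqm1 : \sum_(v | v != 0) chi (v ^+ 2 - 1) = -2.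
Proof.
have := sum_chi_sqm1. rewrite sum0 expr0n /= sub0r chiN1 => E.
apply: (addrI 1). rewrite E. done.
Qed.

Lemma inner_I (v : F) : v != 0 ->
  \sum_(y | y != 0) chi (1 - v ^+ 2 * (y ^+ 2) ^+ 2) = chi v * a - 2.
Proof.
move=> v0.
have full : \sum_y chi (1 - v ^+ 2 * (y ^+ 2) ^+ 2) = -1 + chi v * a.
  rewrite (sum_sq (fun s => chi (1 - v ^+ 2 * s ^+ 2))).
  under eq_bigr do rewrite sqc_chi mulrDl mul1r.
  rewrite big_split /=.
  have -> : \sum_s chi (1 - v ^+ 2 * s ^+ 2) = -1.
    rewrite -sum_chi_1msq -(sum_mulc (fun s => chi (1 - s ^+ 2)) v0).
    apply: eq_bigr => s _. by rewrite exprMn.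
  have -> : \sum_s chi s * chi (1 - v ^+ 2 * s ^+ 2) = chi v * a.
    have vi0 : v^-1 != 0 by rewrite invr_eq0.
    rewrite -(sum_mulc (fun s => chi s * chi (1 - v ^+ 2 * s ^+ 2)) vi0) /=.
    rewrite /a mulr_sumr. apply: eq_bigr => w _.
    rewrite chi_mul chiV (_ : 1 - v ^+ 2 * (v^-1 * w) ^+ 2 = - (w ^+ 2 - 1)); last first.
      by field.
    rewrite chiN -mulrA. congr (_ * _). rewrite -chi_mul. congr chi. ring.
  done.
move: full. rewrite sum0 expr0n /= expr0n /= mulr0 subr0 chi1 => E.
apply: (addrI 1). rewrite E. ring.
Qed.

Lemma Qsum : \sum_(y | y != 0) \sum_(x | x != 0) fQ x y = a ^+ 2 + 4.
Proof.
transitivity (\sum_(y | y != 0) \sum_(v | v != 0)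
   chi (v ^+ 2 - 1) * chi (1 - v ^+ 2 * (y ^+ 2) ^+ 2)).
  apply: eq_bigr => y y0. rewrite -(sum_mulc_nz (fun x => fQ x y) y0).
  apply: eq_bigr => v v0. rewrite /fQ.
  rewrite (_ : (1 - (y * v) ^+ 2 * y ^+ 2) * ((y * v) ^+ 2 - y ^+ 2) =
     y ^+ 2 * ((v ^+ 2 - 1) * (1 - v ^+ 2 * (y ^+ 2) ^+ 2))); last by ring.
  by rewrite chi_mul chi_sq // mul1r chi_mul.
rewrite exchange_big /=.
transitivity (\sum_(v | v != 0) chi (v ^+ 2 - 1) * (chi v * a - 2)).
  apply: eq_bigr => v v0. by rewrite -mulr_sumr inner_I.
transitivity (\sum_(v | v != 0) (a * (chi v * chi (v ^+ 2 - 1)) - 2 * chi (v ^+ 2 - 1))).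
  apply: eq_bigr => v _. ring.
rewrite sumrB -!mulr_sumr sum_nz_a sum_nz_sqm1. ring.
Qed.


Lemma Wsum : \sum_x \sum_y fQ x y = a ^+ 2 + 2 * p%:R + 2.
Proof.
rewrite sum0.
have -> : \sum_y fQ 0 y = p%:R - 1.
  rewrite -sum_chi_sq. apply: eq_bigr => y _. rewrite /fQ expr0n /= mul0r subr0 mul1r sub0r.
  by rewrite chiN.
transitivity (p%:R - 1 + \sum_(x | x != 0) (1 + \sum_(y | y != 0) fQ x y)).
  congr (_ + _). apply: eq_bigr => x x0. rewrite sum0 /fQ expr0n /= mulr0 subr0 subr0 mul1r.
  by rewrite chi_sq.
rewrite big_split /= sum_nz_const mulr1 exchange_big /= Qsum. ring.
Qed.

Lemma card_pair (T1 T2 : finType) (P : T1 -> T2 -> bool) :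
  (#|[set t : T1 * T2 | P t.1 t.2]|%:R : int) = \sum_u (#|[set z | P u z]|%:R).
Proof.
rewrite card_sum -(pair_bigA _ (fun u z => ((P u z)%:R : int))) /=.
apply: eq_bigr => u _. by rewrite card_sum.
Qed.

Lemma exists_i : exists i : F, i ^+ 2 = -1.
Proof.
apply: sqc_pos. have : ((sqc (-1))%:R : int) = 2 by rewrite sqc_chi chiN1.
by case: (sqc (-1)).
Qed.

Lemma M_val : ((M_count p)%:R : int) = p%:R ^+ 2 + a ^+ 2 + 2 * p%:R + 2.
Proof.
rewrite /M_count (card_pair (fun (u : F * F) (z : F) =>
   z ^+ 2 == (u.1 ^+ 2 * u.2 ^+ 2 + 1) * (u.1 ^+ 2 + u.2 ^+ 2))) -/(sqc _).
rewrite -(pair_bigA _ (fun x y => ((sqc ((x ^+ 2 * y ^+ 2 + 1) * (x ^+ 2 + y ^+ 2)))%:R : int))) /=.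
have [i hi] := exists_i.
have i0 : i != 0 by apply/eqP => i0; move: hi; rewrite i0 expr0n /= => /eqP; rewrite eq_sym oppr_eq0 oner_eq0.
transitivity (\sum_x \sum_y (1 + fQ x y)).
  apply: eq_bigr => x _.
  rewrite -(sum_mulc (fun y => ((sqc ((x ^+ 2 * y ^+ 2 + 1) * (x ^+ 2 + y ^+ 2)))%:R : int)) i0).
  apply: eq_bigr => y _. rewrite sqc_chi /fQ exprMn hi. congr (1 + chi _). ring.
under eq_bigr do rewrite big_split /= sumr_const cardF.
rewrite big_split /= sumr_const cardF Wsum.
rewrite -mulr_natl -[(1 *+ p) *+ p]mulr_natl. ring.
Qed.

Lemma N_val : ((N_count p)%:R : int) = p%:R + a.
Proof.
rewrite /N_count (card_pair (fun (x : F) (z : F) => z ^+ 2 == x ^+ 3 - x)).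
under eq_bigr do rewrite -/(sqc _) sqc_chi.
by rewrite big_split /= sumr_const cardF.
Qed.


Definition mk (t : F * F * F * F * F * F) : {ffun 'I_6 -> F} :=
  [ffun i : 'I_6 => nth 0 [:: t.1.1.1.1.1; t.1.1.1.1.2; t.1.1.1.2; t.1.1.2; t.1.2; t.2] i].
Definition un (f : {ffun 'I_6 -> F}) : F * F * F * F * F * F :=
  (f (inord 0), f (inord 1), f (inord 2), f (inord 3), f (inord 4), f (inord 5)).

Lemma mkK : cancel mk un.
Proof. move=> [[[[[x0 x1] x2] x3] x4] x5]. by rewrite /un /mk !ffunE !inordK. Qed.

Lemma unK : cancel un mk.
Proof.
move=> f; apply/ffunP => i; rewrite ffunE.
case: i => [[|[|[|[|[|[|m]]]]]] Hi] //=; congr (f _); apply: val_inj; by rewrite /= inordK.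
Qed.

Lemma sum6 (G : F -> F -> F -> F -> F -> F -> int) :
  \sum_(t : F * F * F * F * F * F) G t.1.1.1.1.1 t.1.1.1.1.2 t.1.1.1.2 t.1.1.2 t.1.2 t.2 =
  \sum_x0 \sum_x1 \sum_x2 \sum_x3 \sum_x4 \sum_x5 G x0 x1 x2 x3 x4 x5.
Proof. by rewrite !pair_bigA. Qed.

Lemma sum_ind (s : F) : \sum_y ((s == y ^+ 2)%:R : int) = (sqc s)%:R.
Proof. rewrite /sqc card_sum. apply: eq_bigr => y _. by rewrite eq_sym. Qed.

Lemma card_Z : (#|[set x : {ffun 'I_6 -> F} | S_eqs x]|%:R : int) =
  \sum_x0 \sum_x1 \sum_x2
    (sqc (x1 ^+ 2 - x2 ^+ 2))%:R * (sqc (x0 ^+ 2 - x1 ^+ 2))%:R * (sqc (x0 ^+ 2 - x2 ^+ 2))%:R.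
Proof.
rewrite card_sum (reindex mk); last by exists un => t _; [apply: mkK | apply: unK].
rewrite /=.
transitivity (\sum_(t : F * F * F * F * F * F)
  ((t.1.1.1.1.2 ^+ 2 - t.1.1.1.2 ^+ 2 == t.1.1.2 ^+ 2)%:R *
   (t.1.1.1.1.1 ^+ 2 - t.1.1.1.1.2 ^+ 2 == t.1.2 ^+ 2)%:R *
   (t.1.1.1.1.1 ^+ 2 - t.1.1.1.2 ^+ 2 == t.2 ^+ 2)%:R : int)).
  apply: eq_bigr => t _. rewrite /S_eqs /mk !ffunE !inordK //=.
  by case: (_ == _); case: (_ == _); case: (_ == _); rewrite ?mulr1 ?mulr0 ?mul0r.
rewrite (sum6 (fun x0 x1 x2 x3 x4 x5 => ((x1 ^+ 2 - x2 ^+ 2 == x3 ^+ 2)%:R *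
   (x0 ^+ 2 - x1 ^+ 2 == x4 ^+ 2)%:R * (x0 ^+ 2 - x2 ^+ 2 == x5 ^+ 2)%:R : int))).
apply: eq_bigr => x0 _; apply: eq_bigr => x1 _; apply: eq_bigr => x2 _.
rewrite -!sum_ind big_distrlr mulr_suml. apply: eq_bigr => x3 _.
rewrite mulr_suml. apply: eq_bigr => x4 _. by rewrite mulr_sumr.
Qed.


Lemma sum_nz_diff (c : F) : c != 0 -> \sum_(x | x != 0) chi (c ^+ 2 - x ^+ 2) = -2.
Proof.
move=> c0.
have : \sum_x chi (c ^+ 2 - x ^+ 2) = -1.
  rewrite -(sum_mulc (fun x => chi (c ^+ 2 - x ^+ 2)) c0) -sum_chi_1msq.
  apply: eq_bigr => w _. rewrite exprMn -{1}(mulr1 (c ^+ 2)) -mulrBr chi_mul chi_sq //.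
  by rewrite mul1r.
rewrite sum0 expr0n /= subr0 chi_sq // => E. apply: (addrI 1). rewrite E. done.
Qed.

Lemma B0_val : \sum_x1 \sum_x2 ((sqc (x1 ^+ 2 - x2 ^+ 2))%:R * (sqc (0 ^+ 2 - x1 ^+ 2))%:R *
     (sqc (0 ^+ 2 - x2 ^+ 2))%:R : int) = 4 * (p%:R - 1) ^+ 2 + 1.
Proof.
transitivity (\sum_x1 (1 + chi (x1 ^+ 2)) *
   \sum_x2 ((1 + chi (x1 ^+ 2 - x2 ^+ 2)) * (1 + chi (x2 ^+ 2)))).
  apply: eq_bigr => x1 _. rewrite mulr_sumr. apply: eq_bigr => x2 _.
  rewrite expr0n /= !sub0r !sqc_chiN !sqc_chi. ring.
rewrite sum0 expr0n /= chi0 addr0 mul1r.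
have -> : \sum_x2 ((1 + chi (0 - x2 ^+ 2)) * (1 + chi (x2 ^+ 2))) = 1 + 4 * (p%:R - 1).
  rewrite sum0 expr0n /= subr0 chi0 addr0 mulr1.
  rewrite [4 * _]mulrC -sum_nz_const. congr (_ + _). apply: eq_bigr => x2 x20.
  by rewrite sub0r chiN chi_sq.
transitivity ((1 + 4 * (p%:R - 1) : int) + \sum_(x1 : F | x1 != 0) (2 * (2 * p%:R - 4) : int)).
  congr (_ + _). apply: eq_bigr => x1 x10. rewrite chi_sq // sum0 expr0n /= subr0 chi0 addr0 mulr1.
  rewrite chi_sq //.
  transitivity (2 * (2 + \sum_(x2 | x2 != 0) (2 + 2 * chi (x1 ^+ 2 - x2 ^+ 2)))).
    congr (_ * (_ + _)). apply: eq_bigr => x2 x20. rewrite chi_sq //. ring.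
  rewrite big_split /= -mulr_sumr sum_nz_diff // sum_nz_const. ring.
rewrite sum_nz_const. ring.
Qed.

Definition uu (m : F) := (m ^+ 2 + 1) / (2 * m).

Lemma chi_uu (m n : F) : m != 0 -> n != 0 -> chi (uu m ^+ 2 - uu n ^+ 2) = fQ m n.
Proof.
move=> m0 n0. have t0 := two_neq0.
rewrite /uu (_ : ((m ^+ 2 + 1) / (2 * m)) ^+ 2 - ((n ^+ 2 + 1) / (2 * n)) ^+ 2 =
   ((2 * m * n)^-1) ^+ 2 * - ((1 - m ^+ 2 * n ^+ 2) * (m ^+ 2 - n ^+ 2))).
  rewrite chi_mul chi_sq ?mul1r ?chiN //. by rewrite invr_eq0 !mulf_neq0.
by field; rewrite ?t0 ?m0 ?n0.
Qed.

Lemma B1_val (x0 : F) : x0 != 0 ->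
  \sum_x1 \sum_x2 ((sqc (x1 ^+ 2 - x2 ^+ 2))%:R * (sqc (x0 ^+ 2 - x1 ^+ 2))%:R *
     (sqc (x0 ^+ 2 - x2 ^+ 2))%:R : int) = (p%:R - 1) ^+ 2 + a ^+ 2 + 4.
Proof.
move=> x00.
transitivity (\sum_y1 (sqc (y1 ^+ 2 - 1))%:R * \sum_y2
   ((sqc (y2 ^+ 2 - 1))%:R * (sqc (y1 ^+ 2 - y2 ^+ 2))%:R : int)).
  rewrite -(sum_mulc _ x00). apply: eq_bigr => y1 _. rewrite mulr_sumr.
  rewrite -(sum_mulc _ x00). apply: eq_bigr => y2 _.
  have E : forall y : F, x0 ^+ 2 - (x0 * y) ^+ 2 = x0 ^+ 2 * - (y ^+ 2 - 1).
    by move=> y; ring.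
  rewrite !E (_ : (x0 * y1) ^+ 2 - (x0 * y2) ^+ 2 = x0 ^+ 2 * (y1 ^+ 2 - y2 ^+ 2)); last by ring.
  rewrite !sqc_scale // !sqc_chiN. ring.
transitivity (\sum_y1 \sum_(n | n != 0)
   ((sqc (y1 ^+ 2 - 1))%:R * (sqc (y1 ^+ 2 - uu n ^+ 2))%:R : int)).
  apply: eq_bigr => y1 _. rewrite (hyper (fun x => (sqc (y1 ^+ 2 - x ^+ 2))%:R)).
  by rewrite mulr_sumr.
rewrite exchange_big /=.
transitivity (\sum_(n | n != 0) \sum_(m | m != 0) (1 + fQ m n)).
  apply: eq_bigr => n n0. rewrite (hyper (fun x => (sqc (x ^+ 2 - uu n ^+ 2))%:R)).
  apply: eq_bigr => m m0. by rewrite sqc_chi -/(uu m) chi_uu.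
under eq_bigr do rewrite big_split /= sum_nz_const mulr1.
rewrite big_split /= sum_nz_const Qsum. ring.
Qed.

Lemma Z_val : (#|[set x : {ffun 'I_6 -> F} | S_eqs x]|%:R : int) =
  4 * (p%:R - 1) ^+ 2 + 1 + (p%:R - 1) * ((p%:R - 1) ^+ 2 + a ^+ 2 + 4).
Proof.
rewrite card_Z sum0 B0_val. congr (_ + _).
rewrite -sum_nz_const. apply: eq_bigr => x0 x00. by rewrite B1_val.
Qed.


Lemma leg_chi (n : nat) : legendre n%:Z p = chi (n%:R).
Proof.
rewrite /legendre /chi.
have -> : (p%:Z %| n%:Z)%Z = (n%:R == 0 :> F) by rewrite -(dvdn_pcharf (pchar_Fp pr)).
case: ifP => // n0.
have E : forall x : 'I_p, (p%:Z %| x%:Z ^+ 2 - n%:Z)%Z = ((x%:R : F) ^+ 2 == n%:R).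
  move=> x. rewrite (dvdz_pcharf (pchar_Fp pr)) rmorphB rmorphXn /= subr_eq0. done.
congr (if _ then _ else _). apply/existsP/idP.
  case=> x. rewrite E => /eqP hx.
  have x0 : (x%:R : F) != 0 by apply/eqP => x0; move: n0; rewrite -hx x0 expr0n eqxx.
  by rewrite -hx -exprM mulnC hh fermat.
move=> /eqP hn. have [y hy] := euler (negbT n0) hn.
have lt : (val y < p)%N by rewrite -[X in (_ < X)%N](Fp_cast pr) ltn_ord.
exists (Ordinal lt). rewrite E /=. by rewrite natr_Zp hy.
Qed.

Lemma J_val : J k = a.
Proof.
have k1 : (1 <= k)%N by have := p_gt2; rewrite pk; lia.
pose g := fun x : F => chi (x ^+ 3 - x).
have ha : a = \sum_(0 <= j < p) g j%:R.
  rewrite /a (_ : index_iota 0 p = index_iota 0 (Zp_trunc (pdiv p)).+2); last by rewrite Fp_cast.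
  rewrite big_mkord. apply: eq_bigr => x _. by rewrite natr_Zp.
have pq : p = (4 * k - 2).+3 by rewrite pk; lia.
rewrite ha (_ : index_iota 0 p = index_iota 0 (4 * k - 2).+3); last by rewrite -pq.
rewrite big_nat_recl // big_nat_recl // big_nat_recr //=.
have -> : g 0%:R = 0 by rewrite /g expr0n /= subr0 chi0.
have -> : g 1%:R = 0 by rewrite /g expr1n subrr chi0.
have -> : g (4 * k - 2).+2%:R = 0.
  have -> : ((4 * k - 2).+2%:R : F) = -1.
    apply/eqP. rewrite -subr_eq0 opprK natr1 -pq. by rewrite pchar_Fp_0.
  rewrite /g (_ : (-1 : F) ^+ 3 - -1 = 0) ?chi0 //. by ring.
rewrite add0r add0r addr0 /J -pk big_add1 /=. apply: eq_bigr => i _.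
rewrite leg_chi /g !natrM. congr chi.
have e1 : (i.+1%:R : F) = i.+2%:R - 1 by rewrite -[i.+2%:R]natr1 addrK.
rewrite -[i.+3%:R]natr1 e1. ring.
Qed.


Lemma S_val : (S_count p)%:Z = (p.+1)%:Z ^+ 2 + a ^+ 2.
Proof.
pose z0 : {ffun 'I_6 -> F} := [ffun _ => 0].
pose Z := [set x : {ffun 'I_6 -> F} | S_eqs x].
have z0Z : z0 \in Z by rewrite inE /S_eqs !ffunE expr0n /= subr0 !eqxx.
have AZ : [set x : {ffun 'I_6 -> F} | [exists i, x i != 0] && S_eqs x] = Z :\ z0.
  apply/setP => x. rewrite !inE. congr (_ && _).
  apply/idP/idP => [|xn].
    case/existsP => i xi. by apply/eqP => E; move: xi; rewrite E ffunE eqxx.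
  rewrite -[[exists _, _]]negbK negb_exists. apply: contra xn => /forallP H.
  apply/eqP/ffunP => i. rewrite ffunE. by apply/eqP; rewrite -[x i == 0]negbK H.
have cZ := cardsD1 z0 Z. rewrite z0Z /= in cZ.
pose K := absz ((p.+1)%:Z ^+ 2 + a ^+ 2).
have KE : K%:Z = (p.+1)%:Z ^+ 2 + a ^+ 2.
  rewrite /K abszE ger0_norm //. by apply: addr_ge0; apply: sqr_ge0.
have cA : #|Z :\ z0| = (p.-1 * K)%N.
  apply/eqP. rewrite -(eqr_nat int) natrM [K%:R]natz KE.
  have := Z_val. rewrite -/Z cZ natrD => E.
  have -> : ((p.-1)%:R : int) = p%:R - 1 by rewrite -subn1 natrB // prime_gt0.
  rewrite (_ : (#|Z :\ z0|%:R : int) = 4 * (p%:R - 1) ^+ 2 + 1 + (p%:R - 1) * ((p%:R - 1) ^+ 2 + a ^+ 2 + 4) - 1).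
    apply/eqP. rewrite -natz. ring.
  rewrite -E. ring.
rewrite /S_count AZ cA mulKn; last by rewrite -subn1 subn_gt0 prime_gt1.
exact: KE.
Qed.

End Main.

Theorem lemma4p6 (p k : nat) :
  prime p -> p = (4 * k + 1)%N ->
  ((S_count p)%:Z = (p.+1)%:Z ^+ 2 + (J k) ^+ 2 <->
   ((M_count p)%:Z = (p.+1)%:Z ^+ 2 + ((N_count p)%:Z - p%:Z) ^+ 2 + 1 /\
    (p.+1)%:Z ^+ 2 + ((N_count p)%:Z - p%:Z) ^+ 2 + 1
      = (p.+1)%:Z ^+ 2 + (J k) ^+ 2 + 1)).
Proof.
move=> pr pk.
have hS := S_val pr pk. have hM := M_val pr pk. have hN := N_val pr pk. have hJ := J_val pr pk.
have eN : (N_count p)%:Z - p%:Z = a p by rewrite -!natz hN; ring.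
rewrite hJ eN -[(M_count p)%:Z]natz hM hS -addn1 PoszD -[Posz p]natz.
split => _; [split; ring | ring].
Qed.
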